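(* Let $(\Gamma,\tau)$ be a $z$-oriented triangulation of a connected closed $2$-dimensional surface, with transition digraph $\Gamma_{\tau}$ and Markov chain $\mathcal{X}_{\tau}$. The following are equivalent: (1) $\mathcal{X}_{\tau}$ is aperiodic; (2) $\mathcal{X}_{\tau}$ is ergodic; (3) there exists a closed directed walk in $\Gamma_{\tau}$ whose length is not divisible by $3$.
   Context: A triangulation $\Gamma$ of a connected closed surface $M$ (not necessarily orientable) is a closed $2$-cell embedding of a connected finite simple graph in $M$ all of whose faces are triangles. Two edges are adjacent if distinct and in a common face; two faces are adjacent if distinct and their intersection is an edge. A zigzag is a sequence of edges $(e_i)_{i\in\mathbb{N}}$ such that for every $i$: $e_i,e_{i+1}$ are adjacent, the faces containing $e_i,e_{i+1}$ and $e_{i+1},e_{i+2}$ are adjacent, and $e_i,e_{i+2}$ are disjoint; it is a cyclic sequence, equivalently a cyclic vertex sequence $v_1,\dots,v_n$ with $e_i=v_iv_{i+1}$, traversing $e_i$ from $v_i$ to $v_{i+1}$. A $z$-orientation $\tau$ is a set of zigzags containing exactly one of $Z,Z^{-1}$ (reversed zigzag) for every zigzag $Z$. Every edge is traversed exactly twice in total by zigzags of $\tau$; it is of type I if in opposite directions, of type II if in the same direction (then regarded as directed that way). Each face has either two type I edges and one type II edge (type I) or three type II edges forming a directed cycle (type II). For $v\in V=\{v_1,\dots,v_n\}$ let $d(v)$ be the number of type I edges at $v$ plus twice the number of type II edges directed out of $v$. Set $p_{ij}=1/d(v_i)$ if $v_iv_j$ is a type I edge, $p_{ij}=2/d(v_i)$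 if $v_iv_j$ is a type II edge directed from $v_i$ to $v_j$, $p_{ij}=0$ otherwise. $\Gamma_{\tau}$ is the digraph on $V$ with edge $v_i\to v_j$ iff $p_{ij}>0$, and $\mathcal{X}_{\tau}$ is the time-homogeneous Markov chain on $V$ with transition matrix $[p_{ij}]$. Ergodic means irreducible and aperiodic. The length of a walk counts edges with multiplicity. *)

(* Defs.v *)
From mathcomp Require Import all_boot all_order all_algebra.
Set Implicit Arguments. Unset Strict Implicit. Unset Printing Implicit Defensive.
Import Order.TTheory GRing.Theory Num.Theory.

Section Triangulation.
Variable V : finType.
Variable F : {set {set V}}. (* the faces, each given by its set of 3 vertices *)

Definition is_edge (e : {set V}) : bool :=
  (#|e| == 2) && [exists f in F, e \subset f].

Definition adj (a b : V) : bool := is_edge [set a; b].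

Definition link_rel (v : V) (a b : V) : bool := [set v; a; b] \in F.

(* (V, F) is a triangulation of a connected closed surface:
   pure 2-dimensional simplicial complex, every vertex lies on a face,
   every edge lies on exactly two faces, the link of every vertex is
   connected (hence a single cycle), and the graph is connected. *)
Definition triangulation : Prop :=
  [/\ F != set0 /\ (forall f, f \in F -> #|f| = 3),
      forall x : V, (exists2 f, f \in F & x \in f),
      forall e, is_edge e -> #|[set f in F | e \subset f]| = 2,
      forall v u w, adj v u -> adj v w -> connect (link_rel v) u w
    & forall u w, connect adj u w].

Definition cyc (x0 : V) (s : seq V) (i : nat) : V := nth x0 s (i %% size s).

Definition zedge (x0 : V) (s : seq V) (i : nat) : {set V} :=
  [set cyc x0 s i; cyc x0 s i.+1].

Definition adjacent_edges (e e' : {set V}) : Prop :=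
  e != e' /\ exists2 f, f \in F & (e \subset f) && (e' \subset f).

Definition adjacent_faces (f g : {set V}) : Prop :=
  f != g /\ is_edge (f :&: g).

(* A zigzag, given as a (primitive) cyclic vertex sequence v_1 ... v_n,
   with e_i = v_i v_{i+1} traversed from v_i to v_{i+1}. *)
Definition is_zigzag (s : seq V) : Prop :=
  [/\ 0 < size s /\ (forall x0 i, is_edge (zedge x0 s i)),
      forall x0 i, adjacent_edges (zedge x0 s i) (zedge x0 s i.+1),
      forall x0 i f g, f \in F -> g \in F ->
        zedge x0 s i \subset f -> zedge x0 s i.+1 \subset f ->
        zedge x0 s i.+1 \subset g -> zedge x0 s i.+2 \subset g ->
        adjacent_faces f g,
      forall x0 i, [disjoint zedge x0 s i & zedge x0 s i.+2]
    & forall k, 0 < k < size s -> rot k s != s].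

Definition same_zz (s t : seq V) : Prop := exists k, rot k s = t.

Definition in_zset (tau : seq (seq V)) (s : seq V) : Prop :=
  exists2 t, t \in tau & same_zz t s.

(* z-orientation: a set of zigzags containing exactly one of Z, Z^{-1}
   for every zigzag Z (the reversed zigzag of v_1..v_n is v_n..v_1). *)
Definition z_orientation (tau : seq (seq V)) : Prop :=
  [/\ forall s, s \in tau -> is_zigzag s,
      uniq tau,
      forall s t, s \in tau -> t \in tau -> same_zz s t -> s = t
    & forall s, is_zigzag s ->
        (in_zset tau s \/ in_zset tau (rev s)) /\
        (in_zset tau s -> in_zset tau (rev s) -> same_zz s (rev s))].

Definition trav (tau : seq (seq V)) (u v : V) : nat :=
  \sum_(s <- tau) count (pred1 (u, v)) (zip s (rot 1 s)).

Definition typeI (tau : seq (seq V)) (u v : V) : bool :=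
  [&& is_edge [set u; v], 0 < trav tau u v & 0 < trav tau v u].

Definition typeII (tau : seq (seq V)) (u v : V) : bool :=
  [&& is_edge [set u; v], 0 < trav tau u v & trav tau v u == 0].

Definition zdeg (tau : seq (seq V)) (v : V) : nat :=
  #|[set u | typeI tau v u]| + 2 * #|[set u | typeII tau v u]|.

Local Open Scope ring_scope.

Definition ptrans (tau : seq (seq V)) (i j : V) : rat :=
  if typeI tau i j then 1 / (zdeg tau i)%:R
  else if typeII tau i j then 2 / (zdeg tau i)%:R
  else 0.

End Triangulation.

Local Open Scope ring_scope.

Section Markov.
Variable S : finType.
Variable P : S -> S -> rat.

Fixpoint nstep (n : nat) (i j : S) : rat :=
  match n with
  | O => (i == j)%:R
  | n'.+1 => \sum_(l : S) nstep n' i l * P l j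
  end.

Definition irreducible : Prop := forall i j, exists n, 0 < nstep n i j.

(* d is the period of i: d = gcd {n >= 1 | (P^n)_ii > 0} *)
Definition is_period (i : S) (d : nat) : Prop :=
  (forall n, (0 < n)%N -> 0 < nstep n i i -> (d %| n)%N) /\
  (forall d', (forall n, (0 < n)%N -> 0 < nstep n i i -> (d' %| n)%N) ->
     (d' %| d)%N).

Definition aperiodic : Prop := forall i, is_period i 1.

Definition ergodic : Prop := irreducible /\ aperiodic.

End Markov.

(* Main.v *)
Require Import Defs.
From mathcomp Require Import all_boot all_order all_algebra.
Import Order.TTheory GRing.Theory Num.Theory.
From mathcomp Require Import zify.
From Stdlib Require Import Classical.
Set Implicit Arguments. Unset Strict Implicit. Unset Printing Implicit Defensive.

Lemma nth_rot' (T : Type) (x0 : T) (s : seq T) k i : k <= size s -> i < size s ->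
  nth x0 (rot k s) i = nth x0 s ((i + k) %% size s).
Proof.
move=> ks iS; rewrite /rot nth_cat size_drop.
case: ltnP => h.
  rewrite nth_drop modn_small. by rewrite addnC. 
  move: h iS ks; move: (size s) => m. lia.
rewrite nth_take; last by move: h iS ks; move: (size s) => m; lia.
have -> : i + k = (i - (size s - k)) + size s by move: h iS ks; move: (size s) => m; lia.
rewrite modnDr modn_small //. move: h iS ks; move: (size s) => m; lia.
Qed.

Section Zig.
Variable V : finType.
Variable F : {set {set V}}.
Hypothesis F3 : forall f, f \in F -> #|f| = 3.
Hypothesis E2 : forall e, is_edge F e -> #|[set f in F | e \subset f]| = 2.

Lemma card3_neq (T : finType) (a b c : T) : #|[set a; b; c]| = 3 -> [/\ a != b, b != c & a != c].
Proof. rewrite -setUA cardsU1 cards2 !inE. by case: eqP; case: eqP; case: eqP. Qed.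

Lemma card3 (T : finType) (a b c : T) : a != b -> b != c -> a != c -> #|[set a; b; c]| = 3.
Proof.
move=> ab bc ac. by rewrite -setUA cardsU1 cards2 !inE bc (negbTE ab) (negbTE ac).
Qed.

Lemma face_neq a b c : [set a; b; c] \in F -> [/\ a != b, b != c & a != c].
Proof. by move=> /F3 /card3_neq. Qed.

Lemma set3_rot (a b c : V) : [set a; b; c] = [set b; c; a].
Proof. apply/setP => x; rewrite !inE. by case: (x == a); case: (x == b); case: (x == c). Qed.

Lemma set3_sw (a b c : V) : [set a; b; c] = [set b; a; c].
Proof. apply/setP => x; rewrite !inE. by case: (x == a); case: (x == b); case: (x == c). Qed.

Lemma sub3 (T : finType) (f : {set T}) a b c : a \in f -> b \in f -> c \in f -> [set a; b; c] \subset f.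
Proof. by move=> af bf cf; rewrite !subUset !sub1set af bf cf. Qed.

Lemma face_eq f a b c : f \in F -> a \in f -> b \in f -> c \in f ->
  a != b -> b != c -> a != c -> f = [set a; b; c].
Proof.
move=> fF af bf cf ab bc ac; apply/eqP; rewrite eq_sym eqEcard card3 // F3 // leqnn andbT.
exact: sub3.
Qed.

Lemma edge_of a b c : [set a; b; c] \in F -> is_edge F [set a; b].
Proof.
move=> fF; have [ab _ _] := face_neq fF.
rewrite /is_edge cards2 ab /=; apply/existsP; exists [set a; b; c].
by rewrite fF /= !subUset !sub1set !inE !eqxx !orbT.
Qed.

Lemma two_faces e f1 f2 g : is_edge F e -> f1 \in F -> f2 \in F -> g \in F ->
  e \subset f1 -> e \subset f2 -> e \subset g -> f1 != g -> f2 != g -> f1 = f2.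
Proof.
move=> He f1F f2F gF s1 s2 s3 n1 n2; apply/eqP; apply: contraT => n12.
have : #|[set f1; f2; g]| <= 2.
  rewrite -(E2 He); apply: subset_leq_card; apply: sub3; by rewrite inE ?f1F ?f2F ?gF.
by rewrite card3.
Qed.

Definition opp (a b c : V) : V := odflt a [pick d | ([set b; c; d] \in F) && (d != a)].

Lemma opp_ex a b c : [set a; b; c] \in F -> exists d, ([set b; c; d] \in F) && (d != a).
Proof.
move=> fF; have [ab bc ac] := face_neq fF.
have He : is_edge F [set b; c] by apply: (@edge_of b c a); rewrite -set3_rot.
set S := [set f in F | [set b; c] \subset f].
have f0S : [set a; b; c] \in S by rewrite inE fF /= !subUset !sub1set !inE !eqxx !orbT.
have : #|S :\ [set a; b; c]| = 1.
  by have := cardsD1 [set a; b; c] S; rewrite f0S E2 //; case.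
move=> /eqP /cards1P[g Eg].
have : g \in S :\ [set a; b; c] by rewrite Eg inE.
rewrite !inE => /andP[gf0 /andP[gF eg]].
have : #|g :\: [set b; c]| = 1.
  by rewrite cardsD (setIidPr eg) F3 // cards2 bc.
move=> /eqP /cards1P[d Ed].
have : d \in g :\: [set b; c] by rewrite Ed inE.
rewrite !inE negb_or => /andP[/andP[db dc] dg].
have bg : b \in g by move/subsetP: eg; apply; rewrite !inE eqxx.
have cg : c \in g by move/subsetP: eg; apply; rewrite !inE eqxx orbT.
have gE : g = [set b; c; d] by apply: face_eq => //; rewrite eq_sym.
exists d; rewrite -gE gF /=; apply: contra gf0 => /eqP da.
by rewrite gE da -set3_rot.
Qed.

Lemma opp_spec a b c : [set a; b; c] \in F ->
  ([set b; c; opp a b c] \in F) /\ (opp a b c != a).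
Proof.
move=> fF; rewrite /opp; case: pickP => [d /andP[]//|none].
by have [d] := opp_ex fF; rewrite none.
Qed.


Definition valid (p : V * V * V) : bool := [set p.1.1; p.1.2; p.2] \in F.
Definition Tz (p : V * V * V) : V * V * V := (p.1.2, p.2, opp p.1.1 p.1.2 p.2).

Lemma Tz_valid p : valid p -> valid (Tz p).
Proof. by case: p => [[a b] c]; rewrite /valid /= => /opp_spec[]. Qed.

Lemma Tz_inj p q : valid p -> valid q -> Tz p = Tz q -> p = q.
Proof.
case: p => [[a b] c]; case: q => [[a' b'] c']; rewrite /valid /Tz /=.
move=> f1F f2F [eb ec ed]; subst b' c'.
have [ab bc ac] := face_neq f1F; have [ab' _ ac'] := face_neq f2F.
have [gF da] := opp_spec f1F; have [_ da'] := opp_spec f2F.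
rewrite -ed in da'.
set d := opp a b c in gF da da'.
have He : is_edge F [set b; c] by apply: (@edge_of b c a); rewrite -set3_rot.
have sub2 : forall x, [set b; c] \subset [set x; b; c].
  by move=> x; rewrite !subUset !sub1set !inE !eqxx !orbT.
have subg : [set b; c] \subset [set b; c; d].
  by rewrite !subUset !sub1set !inE !eqxx !orbT.
have ng : forall x, x != b -> x != c -> d != x -> [set x; b; c] != [set b; c; d].
  move=> x xb xc dx; apply/eqP => E.
  have : x \in [set b; c; d] by rewrite -E !inE eqxx.
  by rewrite !inE (negbTE xb) (negbTE xc) eq_sym (negbTE dx).
have E := two_faces He f1F f2F gF (sub2 a) (sub2 a') subg (ng _ ab ac da) (ng _ ab' ac' da').
have : a \in [set a'; b; c] by rewrite -E !inE eqxx.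
by rewrite !inE (negbTE ab) (negbTE ac) !orbF => /eqP->.
Qed.

Lemma cyc_rot x0 (s : seq V) k i : 0 < size s ->
  cyc x0 (rot k s) i = cyc x0 s (i + minn k (size s)).
Proof.
move=> s0; rewrite rot_minn /cyc size_rot nth_rot' ?geq_minr ?ltn_pmod //.
by rewrite modnDml.
Qed.

Lemma zigzag_of (s : seq V) (w : nat -> V) :
  0 < size s -> (forall x0 i, cyc x0 s i = w i) ->
  (forall i, [set w i; w i.+1; w i.+2] \in F) -> (forall i, w i.+3 != w i) ->
  (forall k, 0 < k < size s -> rot k s != s) -> is_zigzag F s.
Proof.
move=> s0 cw fw ow pr.
have nq : forall i, [/\ w i != w i.+1, w i.+1 != w i.+2 & w i != w i.+2].
  by move=> i; apply: face_neq.
have ed : forall i, is_edge F [set w i; w i.+1] by move=> i; apply: edge_of (fw i).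
split.
- split=> // x0 i; rewrite /zedge !cw; exact: ed.
- move=> x0 i; rewrite /zedge !cw; split.
    apply/eqP => E; have [n1 _ n2] := nq i.
    have : w i \in [set w i.+1; w i.+2] by rewrite -E !inE eqxx.
    by rewrite !inE (negbTE n1) (negbTE n2).
  exists [set w i; w i.+1; w i.+2] => //.
  by rewrite !subUset !sub1set !inE !eqxx !orbT.
- move=> x0 i f g fF gF; rewrite /zedge !cw.
  rewrite !subUset !sub1set => /andP[a1 a2] /andP[_ a3] /andP[b1 b2] /andP[_ b3].
  have [n1 n2 n3] := nq i; have [m1 m2 m3] := nq i.+1; have o := ow i.
  have -> : f = [set w i; w i.+1; w i.+2] by apply: face_eq.
  have -> : g = [set w i.+1; w i.+2; w i.+3] by apply: face_eq.
  split.
    apply/eqP => E; have : w i \in [set w i.+1; w i.+2; w i.+3] by rewrite -E !inE eqxx.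
    by rewrite !inE (negbTE n1) (negbTE n3) eq_sym (negbTE o).
  have -> : [set w i; w i.+1; w i.+2] :&: [set w i.+1; w i.+2; w i.+3] = [set w i.+1; w i.+2].
    apply/setP => x; rewrite !inE.
    have [->|xn] := eqVneq x (w i).
      by rewrite (negbTE n1) (negbTE n3) eq_sym (negbTE o).
    by rewrite /=; case: (x == w i.+1); case: (x == w i.+2).
  exact: ed.
- move=> x0 i; rewrite /zedge !cw.
  have [n1 n2 n3] := nq i; have [m1 m2 m3] := nq i.+1.
  have o' : w i != w i.+3 by rewrite eq_sym ow.
  rewrite -setI_eq0; apply/eqP/setP => x; rewrite !inE.
  have [->|xa] := eqVneq x (w i); first by rewrite /= (negbTE n3) (negbTE o').
  have [->|xb] := eqVneq x (w i.+1); first by rewrite /= (negbTE n2) (negbTE m3).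
  by [].
- exact: pr.
Qed.

Local Notation St := {p : V * V * V | valid p}.
Definition TS (x : St) : St := exist _ (Tz (val x)) (Tz_valid (valP x)).

Lemma TS_inj : injective TS.
Proof.
move=> x y E; apply: val_inj; apply: Tz_inj (valP x) (valP y) _; exact: (congr1 val E).
Qed.

Section Orbit.
Variable p0 : St.
Let n := order TS p0.
Definition st i := val (iter i TS p0).
Definition wz i := (st i).1.1.

Lemma stS i : st i.+1 = Tz (st i).
Proof. by rewrite /st iterS. Qed.

Lemma stE i : st i = (wz i, wz i.+1, wz i.+2).
Proof.
rewrite /wz !stS /=. by case: (st i) => [[x y] z].
Qed.

Lemma wz_face i : [set wz i; wz i.+1; wz i.+2] \in F.
Proof. have := valP (iter i TS p0); rewrite /valid -/(st i) stE //. Qed.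

Lemma wz_opp i : wz i.+3 != wz i.
Proof.
have := opp_spec (wz_face i) => -[_].
by rewrite /wz (stS i.+2) (stS i.+1) stS /= -/(wz i) /= stE.
Qed.


Lemma iter_n : iter n TS p0 = p0.
Proof. exact: (iter_order TS_inj). Qed.

Lemma wz_period i : wz (i + n) = wz i.
Proof. by rewrite /wz /st iterD iter_n. Qed.

Lemma wz_mod i : wz (i %% n) = wz i.
Proof.
rewrite {2}(divn_eq i n); elim: (i %/ n) => [|q IH]; first by rewrite mul0n add0n.
by rewrite mulSn -addnA addnC wz_period.
Qed.

Definition zz := mkseq wz n.

Lemma size_zz : size zz = n.
Proof. by rewrite size_mkseq. Qed.

Lemma cyc_zz x0 i : cyc x0 zz i = wz i.
Proof. by rewrite /cyc size_zz nth_mkseq ?wz_mod // ltn_pmod // order_gt0. Qed.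


Lemma zz_prim k : 0 < k < size zz -> rot k zz != zz.
Proof.
have n0 : 0 < n by rewrite order_gt0.
rewrite size_zz => /andP[k0 kn]; apply/negP => /eqP E.
have wk : forall i, wz (i + k) = wz i.
  move=> i; have := cyc_rot (wz 0) k i (_ : 0 < size zz).
  rewrite size_zz (minn_idPl (ltnW kn)) E !cyc_zz => h.
  by symmetry; apply: h.
have sk : st k = st 0.
  rewrite !stE; have e1 : k.+1 = 1 + k by lia. have e2 : k.+2 = 2 + k by lia.
  by rewrite e1 e2 !wk -{1}[k]add0n wk.
have ik : iter k TS p0 = p0 by apply: val_inj; exact: sk.
have := orbit_uniq TS p0; rewrite /orbit -/n => u.
have := nth_uniq p0 (_ : k < size (traject TS p0 n)) (_ : 0 < size (traject TS p0 n)) u.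
rewrite !size_traject !nth_traject // ik eqxx => /(_ kn n0).
by case: k k0 {kn wk sk ik E}.
Qed.

Lemma zz_zigzag : is_zigzag F zz.
Proof.
apply: (@zigzag_of _ wz).
- by rewrite size_zz order_gt0.
- exact: cyc_zz.
- exact: wz_face.
- exact: wz_opp.
- exact: zz_prim.
Qed.

End Orbit.

Lemma zigzag_through a b c : [set a; b; c] \in F ->
  exists s, [/\ is_zigzag F s, 0 < size s & forall x0, [/\ cyc x0 s 0 = a, cyc x0 s 1 = b & cyc x0 s 2 = c]].
Proof.
move=> H; pose p0 : St := exist _ (a, b, c) H.
exists (zz p0); split; first exact: zz_zigzag.
  by rewrite size_zz order_gt0.
move=> x0; rewrite !cyc_zz.
by split.
Qed.
End Zig.

Section Cons.
Variable V : finType.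

Lemma cyc_x0 x0 y0 (s : seq V) i : 0 < size s -> cyc x0 s i = cyc y0 s i.
Proof. by move=> n0; rewrite /cyc (set_nth_default y0) // ltn_pmod. Qed.

Lemma cyc_mod x0 (s : seq V) i : cyc x0 s (i %% size s) = cyc x0 s i.
Proof. by rewrite /cyc modn_mod. Qed.

Lemma cyc_modS x0 (s : seq V) i : cyc x0 s (i %% size s).+1 = cyc x0 s i.+1.
Proof. by rewrite /cyc -[(i %% size s).+1]addn1 -[i.+1]addn1 modnDml. Qed.

Lemma cyc_add x0 (s : seq V) i : cyc x0 s (i + size s) = cyc x0 s i.
Proof. by rewrite /cyc modnDr. Qed.

Lemma zip_cycP x0 (t : seq V) u v : 0 < size t ->
  reflect (exists i, cyc x0 t i = u /\ cyc x0 t i.+1 = v) ((u, v) \in zip t (rot 1 t)).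
Proof.
move=> n0; apply: (iffP idP).
  move/(nthP (u, v)) => [j]; rewrite size_zip size_rot minnn => jn.
  rewrite nth_zip ?size_rot // nth_rot' // => -[eu ev].
  exists j; split.
    by rewrite /cyc (modn_small jn) -eu; apply: set_nth_default.
  by rewrite /cyc -ev addn1; apply: set_nth_default; rewrite ltn_pmod.
move=> [i [eu ev]]; set j := i %% size t.
have jn : j < size t by rewrite ltn_pmod.
have -> : (u, v) = nth (x0, x0) (zip t (rot 1 t)) j.
  rewrite nth_zip ?size_rot // nth_rot' // -eu -ev /cyc -/j.
  by rewrite /j modnDml addn1.
by apply: mem_nth; rewrite size_zip size_rot minnn.
Qed.

Lemma sum_gt0_has (T : Type) (r : seq T) (f : T -> nat) :
  (0 < \sum_(x <- r) f x) = has (fun x => 0 < f x) r.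
Proof.
elim: r => [|x r IH]; first by rewrite big_nil.
by rewrite big_cons addn_gt0 IH.
Qed.

Lemma trav_posP (tau : seq (seq V)) u v :
  reflect (exists2 t, t \in tau & (u, v) \in zip t (rot 1 t)) (0 < trav tau u v).
Proof.
rewrite /trav sum_gt0_has; apply: (iffP hasP) => -[t tt h]; exists t => //.
  by rewrite -has_count has_pred1 in h.
by rewrite -has_count has_pred1.
Qed.

End Cons.

Lemma consec_rev (V : finType) x0 (s : seq V) i : 0 < size s ->
  exists m, cyc x0 (rev s) m = cyc x0 s i.+1 /\ cyc x0 (rev s) m.+1 = cyc x0 s i.
Proof.
move=> n0.
have -> : cyc x0 s i.+1 = cyc x0 s (i %% size s).+1 by rewrite cyc_modS.
have -> : cyc x0 s i = cyc x0 s (i %% size s) by rewrite /cyc modn_mod.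
have : i %% size s < size s by rewrite ltn_pmod.
move: (i %% size s) => {}i iS.
rewrite /cyc size_rev.
have nr : forall k, k < size s -> nth x0 (rev s) k = nth x0 s (size s - k.+1).
  by move=> k; apply: nth_rev.
move: nr iS n0; move: (size s) => n nr iS n0.
case: (ltngtP i.+1 n) => h.
- exists (n - i.+2).
  have h1 : n - i.+2 < n by lia.
  have h2 : (n - i.+2).+1 < n by lia.
  rewrite (modn_small h1) (modn_small h2) (modn_small h) (modn_small iS).
  rewrite !nr //.
  have -> : n - (n - i.+2).+1 = i.+1 by lia.
  have -> : n - (n - i.+2).+2 = i by lia.
  by [].
- by move: h iS; rewrite ltnNge => /negP.
- exists i; rewrite h modnn (modn_small iS) !nr //.
  have -> : n - i.+1 = 0 by lia.
  have -> : n - 1 = i by lia.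
  by [].
Qed.

Section MarkovWalk.
Variable S : finType.
Variable P : S -> S -> rat.
Hypothesis P0 : forall a b, (0 <= P a b)%R.
Local Open Scope ring_scope.

Lemma nstep_ge0 n i j : 0 <= nstep P n i j.
Proof.
elim: n j => [|n IH] j /=; first by rewrite ler0n.
by apply: sumr_ge0 => l _; apply: mulr_ge0.
Qed.

Lemma nstep_posP n i j : (0 < nstep P n i j) <->
  exists p, [/\ path (fun a b => 0 < P a b) i p, last i p = j & size p = n].
Proof.
elim: n j => [|n IH] j /=.
  split; first by rewrite ltr0n lt0b => /eqP->; exists [::].
  by case=> -[|x p] [_ /= e s] //; rewrite e eqxx ltr01.
split.
  move=> h.
  have : \sum_(l : S) nstep P n i l * P l j != 0 by rewrite gt_eqF.
  rewrite psumr_neq0; last by move=> l _; apply: mulr_ge0 => //; exact: nstep_ge0.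
  case/hasP => l _ /andP[_ hl].
  have hn : 0 < nstep P n i l.
    rewrite lt0r nstep_ge0 andbT; apply: contraTneq hl => ->; by rewrite mul0r ltxx.
  have hp : 0 < P l j.
    rewrite lt0r P0 andbT; apply: contraTneq hl => ->; by rewrite mulr0 ltxx.
  have [p [pp pl ps]] := (IH l).1 hn.
  exists (rcons p j); split.
  - by rewrite rcons_path pp pl.
  - by rewrite last_rcons.
  - by rewrite size_rcons ps.
case=> p [pp pl ps].
case/lastP: p pp pl ps => [|q x] //.
rewrite rcons_path last_rcons size_rcons => /andP[pq ax] xj [qs].
have hn : 0 < nstep P n i (last i q) by apply/(IH _).2; exists q.
rewrite (bigD1 (last i q)) //=; apply: ltr_wpDr.
  by apply: sumr_ge0 => l _; apply: mulr_ge0 => //; exact: nstep_ge0.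
by apply: mulr_gt0 => //; rewrite -xj.
Qed.

End MarkovWalk.


Section Main.
Variable V : finType.
Variable F : {set {set V}}.
Variable tau : seq (seq V).
Hypothesis HT : triangulation F.
Hypothesis HZ : z_orientation F tau.

Let F3 : forall f, f \in F -> #|f| = 3.
Proof. by case: HT => -[]. Qed.
Let E2 : forall e, is_edge F e -> #|[set f in F | e \subset f]| = 2.
Proof. by case: HT. Qed.

Definition arc (u v : V) : bool := (0 < ptrans F tau u v)%R.

Lemma arc_iff u v : arc u v <-> is_edge F [set u; v] /\ 0 < trav tau u v.
Proof.
rewrite /arc /ptrans; split.
  case: ifP => [/and3P[e1 e2 _] _|_]; first by split.
  case: ifP => [/and3P[e1 e2 _] _|_]; first by split.
  by rewrite ltxx.
move=> [He ht].
have zp : forall w, (typeI F tau u w || typeII F tau u w) -> (0 < zdeg F tau u)%N.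
  move=> w /orP[h|h]; rewrite /zdeg addn_gt0; apply/orP; [left|right].
    by apply/card_gt0P; exists w; rewrite inE.
  by rewrite muln_gt0 /=; apply/card_gt0P; exists w; rewrite inE.
case: ifP => h1.
  by apply: divr_gt0; rewrite ?ltr01 // ltr0n; apply: (zp v); rewrite h1.
have h2 : typeII F tau u v.
  rewrite /typeII He ht /=; move: h1; rewrite /typeI He ht /=.
  by rewrite lt0n => /negbT; rewrite negbK.
rewrite h2; apply: divr_gt0; rewrite ?ltr0n //; apply: (zp v); by rewrite h2 orbT.
Qed.

Lemma tau_zz t : t \in tau -> is_zigzag F t.
Proof. by case: HZ => H _ _ _; apply: H. Qed.

Lemma tau_size t : t \in tau -> 0 < size t.
Proof. by move/tau_zz => [[]]. Qed.

Lemma zz_arc t x0 i : t \in tau -> arc (cyc x0 t i) (cyc x0 t i.+1).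
Proof.
move=> tt; apply/arc_iff; split.
  by have [[_ H] _ _ _ _] := tau_zz tt; apply: H.
apply/trav_posP; exists t => //; apply/(zip_cycP x0 _ _ (tau_size tt)).
by exists i.
Qed.

Definition walk n u v := exists p, [/\ path arc u p, last u p = v & size p = n].
Definition reach u v := exists n, walk n u v.

Lemma walk0 u : walk 0 u u.
Proof. by exists [::]. Qed.

Lemma walk_cat m n u v w : walk m u v -> walk n v w -> walk (m + n) u w.
Proof.
move=> [p [pp pl ps]] [q [qp ql qs]]; exists (p ++ q); split.
- by rewrite cat_path pp pl.
- by rewrite last_cat pl.
- by rewrite size_cat ps qs.
Qed.

Lemma walk1 u v : arc u v -> walk 1 u v.
Proof. by move=> h; exists [:: v]; rewrite /= h. Qed.

Lemma reach_trans u v w : reach u v -> reach v w -> reach u w.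
Proof. by move=> [m h1] [n h2]; exists (m + n); apply: walk_cat h1 h2. Qed.

Lemma arc_reach u v : arc u v -> reach u v.
Proof. by move=> h; exists 1; apply: walk1. Qed.

Lemma zz_walk t x0 i m : t \in tau -> walk m (cyc x0 t i) (cyc x0 t (i + m)).
Proof.
move=> tt; elim: m => [|m IH]; first by rewrite addn0; apply: walk0.
rewrite -addn1; apply: walk_cat IH _; rewrite addn1 addnS; apply: walk1.
exact: zz_arc.
Qed.

Lemma trav_back u v : 0 < trav tau u v -> reach v u.
Proof.
case/trav_posP => t tt /(zip_cycP u _ _ (tau_size tt)) [i [eu ev]].
exists (size t).-1; rewrite -eu -ev.
have := zz_walk u i.+1 (size t).-1 tt.
have -> : i.+1 + (size t).-1 = i + size t by have := tau_size tt; lia.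
by rewrite cyc_add.
Qed.

Lemma arc_back u v : arc u v -> reach v u.
Proof. by move=> /arc_iff[_]; apply: trav_back. Qed.

Lemma trav_of_rot t k (r : seq V) x0 i : t \in tau -> rot k t = r ->
  0 < trav tau (cyc x0 r i) (cyc x0 r i.+1).
Proof.
move=> tt <-; have n0 := tau_size tt.
rewrite !cyc_rot //; apply/trav_posP; exists t => //.
by apply/(zip_cycP x0 _ _ n0); exists (i + minn k (size t)); rewrite addSn.
Qed.

Lemma pass_trav a b c : [set a; b; c] \in F ->
  (0 < trav tau a b /\ 0 < trav tau b c) \/ (0 < trav tau c b /\ 0 < trav tau b a).
Proof.
move=> fF; have [s [zs s0 hs]] := zigzag_through F3 E2 fF.
have [e1 e2 e3] := hs a.
case: HZ => _ _ _ /(_ s zs) [[[t tt [k E]]|[t tt [k E]]] _].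
  left; split.
    by have := trav_of_rot a 0 tt E; rewrite e2 e1.
  by have := trav_of_rot a 1 tt E; rewrite e3 e2.
right; split.
  have [m [m1 m2]] := consec_rev a 1 s0.
  by have := trav_of_rot a m tt E; rewrite m1 m2 e3 e2.
have [m [m1 m2]] := consec_rev a 0 s0.
by have := trav_of_rot a m tt E; rewrite m1 m2 e2 e1.
Qed.

Lemma pass_arc a b c : [set a; b; c] \in F ->
  (arc a b /\ arc b c) \/ (arc c b /\ arc b a).
Proof.
move=> fF.
have eab : is_edge F [set a; b] by apply: (edge_of F3 fF).
have ebc : is_edge F [set b; c] by apply: (@edge_of _ _ F3 b c a); rewrite -set3_rot.
have eba : is_edge F [set b; a] by rewrite setUC.
have ecb : is_edge F [set c; b] by rewrite setUC.
case: (pass_trav fF) => -[h1 h2]; [left|right]; split; apply/arc_iff; by split.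
Qed.

Lemma adj_reach u v : adj F u v -> reach u v.
Proof.
rewrite /adj /is_edge cards2 => /andP[uv2 /exists_inP[f fF sf]].
have uv : u != v by move: uv2; case: (u != v).
have uf : u \in f by move/subsetP: sf; apply; rewrite !inE eqxx.
have vf : v \in f by move/subsetP: sf; apply; rewrite !inE eqxx orbT.
have : #|f :\: [set u; v]| = 1 by rewrite cardsD (setIidPr sf) F3 // cards2 uv.
move=> /eqP /cards1P[w Ew].
have : w \in f :\: [set u; v] by rewrite Ew inE.
rewrite !inE negb_or => /andP[/andP[wu wv] wf].
have fE : f = [set u; v; w] by apply: (face_eq F3) => //; rewrite eq_sym.
rewrite fE in fF; case: (pass_arc fF) => -[h1 h2].
  exact: arc_reach.
exact: arc_back.
Qed.

Lemma all_reach u w : reach u w.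
Proof.
case: HT => _ _ _ _ /(_ u w) /connectP[p pp ->] {w}.
elim: p u pp => [|x p IH] u /=; first by exists 0; apply: walk0.
case/andP => ux pp; apply: reach_trans (adj_reach ux) (IH _ pp).
Qed.

Lemma tri x y z : arc x y -> arc y z -> arc z x -> exists a, walk 3 a a.
Proof. by move=> h1 h2 h3; exists x, [:: y; z; x]; rewrite /= h1 h2 h3. Qed.

Lemma triangle : exists a, walk 3 a a.
Proof.
case: HT => -[/set0Pn[f fF] _] _ _ _ _.
have : 0 < #|f| by rewrite F3.
case/card_gt0P => a af.
have : #|f :\ a| = 2 by have := cardsD1 a f; rewrite af F3 //; case.
move=> c2; have : 0 < #|f :\ a| by rewrite c2.
case/card_gt0P => b; rewrite !inE => /andP[ba bf].
have : #|(f :\ a) :\ b| = 1.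
  by have := cardsD1 b (f :\ a); rewrite !inE ba bf c2; case.
move=> /eqP /cards1P[c Ec].
have : c \in (f :\ a) :\ b by rewrite Ec inE.
rewrite !inE => /andP[cb /andP[ca cf]].
have fE : f = [set a; b; c] by apply: (face_eq F3) => //; rewrite eq_sym.
rewrite fE in fF.
have f2 : [set b; c; a] \in F by rewrite -set3_rot.
have f3 : [set c; a; b] \in F by rewrite -set3_rot.
case: (pass_arc fF) => -[? ?]; case: (pass_arc f2) => -[? ?]; case: (pass_arc f3) => -[? ?];
  first [ by apply: (@tri a b c) | by apply: (@tri a c b) ].
Qed.

End Main.

Local Open Scope ring_scope.

Theorem proposition2 (V : finType) (F : {set {set V}}) (tau : seq (seq V)) :
  triangulation F -> z_orientation F tau ->
  [<-> aperiodic (ptrans F tau);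
       ergodic (ptrans F tau);
       exists (x : V) (p : seq V),
         [/\ path (fun a b => 0 < ptrans F tau a b) x p,
             last x p = x
           & ~~ (3 %| size p)%N]].
Proof.
move=> HT HZ.
have P0 : forall a b, (0 <= ptrans F tau a b)%R.
  move=> a b; rewrite /ptrans; case: ifP => _; [|case: ifP => _];
    rewrite ?lexx //; apply: divr_ge0; rewrite ?ler0n //.
have walkP : forall n i j, (0 < nstep (ptrans F tau) n i j)%R <-> walk F tau n i j.
  by move=> n i j; apply: nstep_posP.
have irr : irreducible (ptrans F tau).
  move=> i j; have [n h] := all_reach HT HZ i j; exists n; exact/walkP.
have [a Ha] := triangle HT HZ.
tfae.
- by move=> ap; split.
- move=> [_ ap]; case: (classic (exists (x : V) (p : seq V),
         [/\ path (fun a b => 0 < ptrans F tau a b) x p,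
             last x p = x
           & ~~ (3 %| size p)%N])) => // H.
  have := (ap a).2 3; rewrite dvdn1 => h; exfalso; suff : (3 == 1)%N by [].
  apply: h => n n0 /walkP [p [pp pl ps]].
  apply/negPn/negP => nd; apply: H; exists a, p; split => //; by rewrite ps.
- move=> [x [p [pp pl nd]]] i; split; first by move=> n _ _; exact: dvd1n.
  move=> d Hd.
  have wL : walk F tau (size p) x x by exists p.
  have [l1 w1] := all_reach HT HZ i x; have [l2 w2] := all_reach HT HZ x i.
  have [l3 w3] := all_reach HT HZ i a; have [l4 w4] := all_reach HT HZ a i.
  have W0 := walk_cat (walk_cat w1 w2) (walk_cat (walk_cat w3 Ha) w4).
  have W1 := walk_cat (walk_cat (walk_cat w1 wL) w2) (walk_cat (walk_cat w3 Ha) w4).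
  have W2 := walk_cat (walk_cat w1 w2) (walk_cat (walk_cat (walk_cat w3 Ha) Ha) w4).
  set c := l1 + l2 + (l3 + 3 + l4) in W0.
  have e1 : (l1 + size p + l2 + (l3 + 3 + l4) = c + size p)%N by rewrite /c; lia.
  have e2 : (l1 + l2 + (l3 + 3 + 3 + l4) = c + 3)%N by rewrite /c; lia.
  rewrite e1 in W1; rewrite e2 in W2.
  have c0 : (0 < c)%N by rewrite /c; lia.
  have d0 := Hd _ c0 ((walkP _ _ _).2 W0).
  have d1 := Hd _ (leq_trans c0 (leq_addr _ _)) ((walkP _ _ _).2 W1).
  have d2 := Hd _ (leq_trans c0 (leq_addr _ _)) ((walkP _ _ _).2 W2).
  rewrite (dvdn_addr _ d0) in d1; rewrite (dvdn_addr _ d0) in d2.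
  have : coprime 3 (size p) by rewrite prime_coprime.
  rewrite /coprime => /eqP <-; by rewrite dvdn_gcd d1 d2.
Qed.
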